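(* For $\lambda>0$ let $\eta = \eta(\lambda) = (\lambda-1)\sqrt{\frac{2 (\lambda-1-\ln \lambda)}{(\lambda-1)^{2}}}$ (principal branch of the root). Let $\gamma_j$ be the Stirling coefficients $\gamma_{j} = \frac{(-1)^{j}}{2^{j} \, j!} \Big[ \frac{d^{2j}}{dx^{2j}} \Big( \frac{1}{2}\frac{x^{2}}{x-\ln(1+x)} \Big)^{j+\frac{1}{2}} \Big]_{x=0}$, and define functions $c_j(\eta)$ by $c_{0}(\eta) = \frac{1}{\lambda-1}-\frac{1}{\eta}$ and $c_{j}(\eta) = \frac{1}{\eta} \frac{d}{d\eta}c_{j-1}(\eta) + \frac{\gamma_{j}}{\lambda-1}$ for $j \geq 1$ (with $\lambda$ regarded as a function of $\eta$). Then for every $j \geq 0$, $$c_j(\eta) = \varphi_j(\lambda) - S(\varphi_j(\lambda)), \qquad \varphi_j(\lambda) := \frac{(-1)^{j+1} (2j-1)!!}{\eta^{2j+1}},$$ where $S(\varphi_j(\lambda))$ denotes the singular part of $\varphi_j$ at $\lambda = 1$, i.e. the sum of the terms with negative powers of $\lambda-1$ in the Laurent expansion of $\varphi_j(\lambda)$ at $\lambda=1$.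
   Context: $(2j-1)!!=1\cdot3\cdots(2j-1)$, with $(-1)!!=1$. The map $\lambda\mapsto\eta$ is real-analytic and increasing with $\eta(1)=0$, $\eta'(1)=1$, so $\eta^{-(2j+1)}$ has a pole of order $2j+1$ at $\lambda=1$. (These $c_j$ are the coefficients in Temme's uniform asymptotic expansion $R_a(\eta)\sim \frac{e^{-a\eta^2/2}}{\sqrt{2\pi a}}\sum_j c_j(\eta)a^{-j}$ of the remainder in $\gamma(a,z)/\Gamma(a)=\frac12\mathrm{erfc}(-\eta\sqrt{a/2})-R_a(\eta)$, $\lambda=z/a$.) *)

(* Defs.v *)
From Stdlib Require Import Reals ClassicalEpsilon.
From Coquelicot Require Import Coquelicot.
Open Scope R_scope.

Definition eta (l : R) : R :=
  (l - 1) * sqrt (2 * (l - 1 - ln l) / (l - 1) ^ 2).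

(* lambda as a function of eta: the inverse of eta : (0,+oo) -> R
   (eta is an increasing bijection from (0,+oo) onto R). *)
Definition lam_of (e : R) : R :=
  epsilon (inhabits 1) (fun l => 0 < l /\ eta l = e).

(* g(x) = (1/2) x^2 / (x - ln(1+x)), extended by continuity (g(0) = 1). *)
Definition stir_g (x : R) : R :=
  if Req_EM_T x 0 then 1 else / 2 * x ^ 2 / (x - ln (1 + x)).

Definition gamma_st (j : nat) : R :=
  (-1) ^ j / (2 ^ j * INR (Factorial.fact j)) *
  Derive_n (fun x => Rpower (stir_g x) (INR j + / 2)) (2 * j) 0.

Fixpoint c_fun (j : nat) : R -> R :=
  match j with
  | O => fun e => 1 / (lam_of e - 1) - 1 / e
  | S j' => fun e => 1 / e * Derive (c_fun j') e + gamma_st j / (lam_of e - 1)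
  end.

(* (2j-1)!! = 1 * 3 * ... * (2j-1), with (-1)!! = 1. *)
Fixpoint odd_dfact (j : nat) : nat :=
  match j with
  | O => 1%nat
  | S j' => ((2 * j' + 1) * odd_dfact j')%nat
  end.

Definition phi (j : nat) (l : R) : R :=
  (-1) ^ (S j) * INR (odd_dfact j) / eta l ^ (2 * j + 1).

(* S is the singular (principal) part of f at a: f has a Laurent expansion
   f(x) = sum_{k=1}^{N+1} b_k (x-a)^{-k} + sum_{n>=0} c_n (x-a)^n  on a punctured
   neighbourhood 0 < |x-a| < r, and S(x) is the sum of the negative-power terms. *)
Definition is_singular_part (f : R -> R) (a : R) (Sp : R -> R) : Prop :=
  exists (N : nat) (b c : nat -> R) (r : R),
    0 < r /\
    (forall x, Sp x = sum_f_R0 (fun k => b k / (x - a) ^ (S k)) N) /\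
    (forall x, 0 < Rabs (x - a) < r -> is_pseries c (x - a) (f x - Sp x)).

(* Main.v *)
Require Import Defs.
From Stdlib Require Import Reals ClassicalEpsilon.
From Coquelicot Require Import Coquelicot.
From Stdlib Require Import Lra Lia.
Open Scope R_scope.


Lemma rad_ge (a : nat -> R) (r : R) :
  0 < r -> (forall x, 0 < Rabs x < r -> ex_pseries a x) -> Rbar_le r (CV_radius a).
Proof.
  intros Hr H.
  assert (H0 := CV_radius_ge_0 a).
  destruct (CV_radius a) as [l| |] eqn:E; simpl in *; try easy.
  apply Rnot_lt_le; intro Hl.
  set (t := (l + r)/2).
  assert (Ht : 0 < Rabs t < r) by (unfold t; rewrite Rabs_pos_eq; lra).
  destruct (H t Ht) as [s Hs].
  assert (Hlim : is_lim_seq (fun n => a n * t ^ n) 0).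
  { apply is_lim_seq_ext with (fun n => scal (pow_n t n) (a n)).
    intro n. rewrite pow_n_pow. unfold scal; simpl. unfold mult; simpl. ring.
    apply ex_series_lim_0. exists s. exact Hs. }
  apply (CV_disk_outside a t). rewrite E. simpl. unfold t; rewrite Rabs_pos_eq; lra.
  exact Hlim.
Qed.

Lemma rad_lt (a : nat -> R) (r x : R) :
  Rbar_le r (CV_radius a) -> Rabs x < r -> Rbar_lt (Rabs x) (CV_radius a).
Proof.
  intros H1 H2. destruct (CV_radius a); simpl in *; try easy; lra.
Qed.

Definition Sing (b : nat -> R) (N : nat) (x : R) : R :=
  sum_f_R0 (fun k => b k / x ^ (S k)) N.

Fixpoint pr (b : nat -> R) (N : nat) (x : R) : R :=
  match N with O => b O | S M => x * pr b M x + b (S M) end.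

Lemma sing_pr b N x : x <> 0 -> x ^ (S N) * Sing b N x = pr b N x.
Proof.
  intro Hx. induction N as [|N IH]; unfold Sing in *; simpl sum_f_R0.
  - simpl. field. exact Hx.
  - simpl pr. rewrite <- IH.
    assert (x ^ S N <> 0) by (apply pow_nonzero; exact Hx).
    assert (x ^ S (S N) <> 0) by (apply pow_nonzero; exact Hx).
    rewrite Rmult_plus_distr_l. f_equal.
    + simpl. ring.
    + simpl. field. split; [apply pow_nonzero|]; exact Hx.
Qed.

Lemma pr_cont b N x : continuity_pt (pr b N) x.
Proof.
  induction N as [|N IH]; simpl.
  - apply continuity_pt_const. intros u v; reflexivity.
  - apply continuity_pt_plus.
    + apply continuity_pt_mult; [apply derivable_continuous_pt, derivable_pt_id | exact IH].
    + apply continuity_pt_const. intros u v; reflexivity.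
Qed.

Lemma pr_0 b N : pr b N 0 = b N.
Proof. destruct N; simpl; ring. Qed.

Lemma eq_at_0 (f g : R -> R) (r : R) :
  0 < r -> continuity_pt f 0 -> continuity_pt g 0 ->
  (forall x, 0 < Rabs x < r -> f x = g x) -> f 0 = g 0.
Proof.
  intros Hr Hf Hg H.
  destruct (Req_dec (f 0) (g 0)) as [E|E]; [exact E|exfalso].
  set (eps := Rabs (f 0 - g 0) / 2).
  assert (He : eps > 0) by (unfold eps; assert (0 < Rabs (f 0 - g 0)) by (apply Rabs_pos_lt; intro; apply E; lra); lra).
  destruct (Hf eps He) as [a1 [Ha1 H1]].
  destruct (Hg eps He) as [a2 [Ha2 H2]].
  set (x := Rmin r (Rmin a1 a2) / 2).
  assert (Hx0 : 0 < x) by (unfold x; repeat apply Rmin_case; lra).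
  assert (Hx1 : x < r) by (unfold x; assert (Rmin r (Rmin a1 a2) <= r) by apply Rmin_l; lra).
  assert (Hx2 : x < a1) by (unfold x; assert (Rmin r (Rmin a1 a2) <= Rmin a1 a2) by apply Rmin_r;
     assert (Rmin a1 a2 <= a1) by apply Rmin_l; lra).
  assert (Hx3 : x < a2) by (unfold x; assert (Rmin r (Rmin a1 a2) <= Rmin a1 a2) by apply Rmin_r;
     assert (Rmin a1 a2 <= a2) by apply Rmin_r; lra).
  assert (D : D_x no_cond 0 x) by (split; [exact I | lra]).
  assert (H1' : Rabs (f x - f 0) < eps).
  { apply (H1 x). split; [exact D|]. simpl. unfold R_dist. rewrite Rminus_0_r, Rabs_pos_eq; lra. }
  assert (H2' : Rabs (g x - g 0) < eps).
  { apply (H2 x). split; [exact D|]. simpl. unfold R_dist. rewrite Rminus_0_r, Rabs_pos_eq; lra. }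
  clear H1 H2. rename H1' into H1. rename H2' into H2.
  rewrite H in H1 by (rewrite Rabs_pos_eq; lra).
  assert (Rabs (f 0 - g 0) <= Rabs (g x - f 0) + Rabs (g x - g 0)).
  { replace (f 0 - g 0) with (-(g x - f 0) + (g x - g 0)) by ring.
    eapply Rle_trans; [apply Rabs_triang|]. rewrite Rabs_Ropp; lra. }
  unfold eps in *. lra.
Qed.

Lemma sing_top_zero b N c r :
  0 < r -> (forall x, 0 < Rabs x < r -> is_pseries c x (Sing b N x)) -> b N = 0.
Proof.
  intros Hr H.
  assert (Hrad : Rbar_le r (CV_radius c)).
  { apply rad_ge; [exact Hr|]. intros x Hx. eexists; apply H; exact Hx. }
  rewrite <- pr_0.
  transitivity (0 ^ S N * PSeries c 0).
  - apply (eq_at_0 (pr b N) (fun x => x ^ S N * PSeries c x) r Hr).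
    + apply pr_cont.
    + apply continuity_pt_mult.
      * apply derivable_continuous_pt, derivable_pt_pow.
      * apply PSeries_continuity. apply (rad_lt _ r); [exact Hrad| rewrite Rabs_R0; exact Hr].
    + intros x Hx. rewrite (is_pseries_unique _ _ _ (H x Hx)).
      rewrite sing_pr; [reflexivity|]. intro E; subst; rewrite Rabs_R0 in Hx; lra.
  - simpl. ring.
Qed.

Lemma sing_unique N : forall b c r,
  0 < r -> (forall x, 0 < Rabs x < r -> is_pseries c x (Sing b N x)) ->
  forall k, (k <= N)%nat -> b k = 0.
Proof.
  induction N as [|N IH]; intros b c r Hr H k Hk.
  - replace k with O by lia. exact (sing_top_zero b O c r Hr H).
  - assert (Hb := sing_top_zero b (S N) c r Hr H).
    destruct (Nat.eq_dec k (S N)) as [->|Hne]; [exact Hb|].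
    apply (IH b c r Hr); [|lia].
    intros x Hx. specialize (H x Hx). unfold Sing in H. simpl sum_f_R0 in H.
    rewrite Hb in H. unfold Rdiv in H. rewrite Rmult_0_l, Rplus_0_r in H. exact H.
Qed.


Lemma rad_bound (a : nat -> R) (r M : R) :
  (forall n, Rabs (a n * r ^ n) <= M) -> Rbar_le r (CV_radius a).
Proof.
  intro H. destruct (CV_radius_bounded a) as [Hub _]. apply Hub. exists M. exact H.
Qed.

Definition qc (n : nat) : R := 2 * (-1) ^ n / INR (n + 2).

Lemma qc_abs n : Rabs (qc n) <= 1.
Proof.
  unfold qc. rewrite plus_INR. simpl (INR 2).
  assert (0 <= INR n) by apply pos_INR.
  unfold Rdiv. rewrite Rabs_mult, Rabs_mult, Rabs_inv, pow_1_abs, (Rabs_pos_eq 2), (Rabs_pos_eq (INR n + (1+1))) by lra.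
  apply (Rmult_le_reg_r (INR n + (1+1))); [lra|]. field_simplify; lra.
Qed.

Lemma Q_rad : Rbar_le 1 (CV_radius qc).
Proof.
  apply (rad_bound _ _ 1). intro n. rewrite pow1, Rmult_1_r. apply qc_abs.
Qed.

Lemma Q_in x : Rabs x < 1 -> Rbar_lt (Rabs x) (CV_radius qc).
Proof. intro; apply (rad_lt _ 1); [apply Q_rad|assumption]. Qed.

Definition Qf (x : R) : R := PSeries qc x.
Definition dQf (x : R) : R := PSeries (PS_derive qc) x.

Lemma Q_der x : Rabs x < 1 -> is_derive Qf x (dQf x).
Proof. intro H. apply is_derive_PSeries. apply Q_in; exact H. Qed.

Lemma Q_0 : Qf 0 = 1.
Proof. unfold Qf. rewrite PSeries_0. unfold qc. simpl. field. Qed.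

Lemma geom_alt x : Rabs x < 1 -> is_pseries (fun n => (-1) ^ n) x (/ (1 + x)).
Proof.
  intro H.
  assert (Hg := is_series_geom (-x) ltac:(rewrite Rabs_Ropp; exact H)).
  replace (1 + x) with (1 - - x) by ring.
  unfold is_pseries. eapply is_series_ext; [|exact Hg].
  intro n. rewrite pow_n_pow. unfold scal; simpl. unfold mult; simpl.
  rewrite <- Rpow_mult_distr. f_equal. ring.
Qed.

Lemma Q_ode x : Rabs x < 1 -> Qf x + x * dQf x / 2 = / (1 + x).
Proof.
  intro H.
  assert (H1 : is_pseries qc x (Qf x)) by (apply PSeries_correct, CV_radius_inside, Q_in, H).
  assert (H2 : is_pseries (PS_derive qc) x (dQf x)).
  { apply PSeries_correct, CV_radius_inside. rewrite CV_radius_derive. apply Q_in, H. }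
  apply is_pseries_incr_1 in H2.
  apply (is_pseries_scal (/2)) in H2; [|unfold mult; simpl; ring].
  assert (H3 := is_pseries_plus _ _ _ _ _ H1 H2).
  apply is_pseries_unique in H3.
  assert (H4 := is_pseries_unique _ _ _ (geom_alt x H)).
  rewrite <- H4. unfold plus, scal in H3; simpl in H3. unfold mult in H3; simpl in H3.
  replace (Qf x + x * dQf x / 2) with (Qf x + / 2 * (x * dQf x)) by (field).
  rewrite <- H3. apply PSeries_ext. intro n.
  destruct n as [|n].
  - change (qc 0 + /2 * 0 = (-1)^0). unfold qc. simpl. field.
  - change (qc (S n) + /2 * (INR (S n) * qc (S n)) = (-1)^S n). unfold qc.
    rewrite plus_INR, S_INR. simpl (INR 2).
    field. assert (0 <= INR n) by apply pos_INR. lra.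
Qed.

Lemma derive_cont f x l : is_derive f x l -> continuity_pt f x.
Proof. intro H. apply derivable_continuous_pt. exists l. apply is_derive_Reals. exact H. Qed.

Lemma const_on_interval (f : R -> R) (a b : R) :
  (forall t, Rmin a b <= t <= Rmax a b -> is_derive f t 0) -> f b = f a.
Proof.
  intro H.
  destruct (MVT_gen f a b (fun _ => 0)) as [c [_ Hc]].
  - intros t Ht. apply H. lra.
  - intros t Ht. apply (derive_cont _ _ 0). apply H. exact Ht.
  - lra.
Qed.

Lemma Q_ln x : Rabs x < 1 -> x ^ 2 * Qf x / 2 = x - ln (1 + x).
Proof.
  intro Hx.
  set (M := fun t => t^2 * Qf t / 2 - (t - ln (1+t))).
  assert (HM : M x = M 0).
  { apply const_on_interval. intros t Ht.
    assert (Htt : Rabs t < 1).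
    { apply Rabs_def1; revert Ht; apply Rmin_case; apply Rmax_case; intros;
       apply Rabs_def2 in Hx; lra. }
    assert (Ht1 : -1 < t) by (apply Rabs_def2 in Htt; lra).
    unfold M. auto_derive.
    - split; [|split; [lra|exact I]]. eexists. apply Q_der. exact Htt.
    - change (fun x0 : R => Qf x0) with Qf. rewrite (is_derive_unique Qf t _ (Q_der t Htt)).
      assert (E := Q_ode t Htt).
      replace (Qf t) with (/ (1 + t) - t * dQf t / 2) by lra.
      field. lra. }
  unfold M in HM. rewrite Rplus_0_r, ln_1 in HM. lra.
Qed.


Definition newc (n : nat) (f : nat -> R) : R :=
  - (2 * sum_f_R0 (fun i => qc (S i) * INR (n - i) * f (n - i)%nat) n
     + sum_f_R0 (fun i => PS_derive qc i * f (n - i)%nat) n) / (2 * INR (S n)).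

Fixpoint Aseq (n : nat) : nat -> R :=
  match n with
  | O => fun _ => 1
  | S m => fun k => if (k <=? m)%nat then Aseq m k else newc m (Aseq m)
  end.

Definition ac (n : nat) : R := Aseq n n.

Lemma Aseq_stable m : forall k, (k <= m)%nat -> Aseq m k = ac k.
Proof.
  induction m as [|m IH]; intros k Hk.
  - replace k with O by lia. reflexivity.
  - destruct (Nat.eq_dec k (S m)) as [->|Hne]; [reflexivity|].
    change (Aseq (S m) k) with (if (k <=? m)%nat then Aseq m k else newc m (Aseq m)).
    replace (k <=? m)%nat with true by (symmetry; apply Nat.leb_le; lia).
    apply IH. lia.
Qed.

Lemma newc_ext n f g : (forall k, (k <= n)%nat -> f k = g k) -> newc n f = newc n g.
Proof.
  intro H. unfold newc.
  rewrite (sum_eq (fun i => qc (S i) * INR (n - i) * f (n - i)%nat)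
                  (fun i => qc (S i) * INR (n - i) * g (n - i)%nat))
    by (intros i Hi; rewrite H by lia; reflexivity).
  rewrite (sum_eq (fun i => PS_derive qc i * f (n - i)%nat)
                  (fun i => PS_derive qc i * g (n - i)%nat))
    by (intros i Hi; rewrite H by lia; reflexivity).
  reflexivity.
Qed.

Lemma ac_0 : ac 0 = 1.
Proof. reflexivity. Qed.

Lemma ac_rec n : ac (S n) = newc n ac.
Proof.
  unfold ac at 1.
  change (Aseq (S n) (S n)) with (if (S n <=? n)%nat then Aseq n (S n) else newc n (Aseq n)).
  replace (S n <=? n)%nat with false by (symmetry; apply Nat.leb_gt; lia).
  apply newc_ext. intros k Hk. apply Aseq_stable. exact Hk.
Qed.

Lemma qc_0 : qc 0 = 1.
Proof. unfold qc. simpl. field. Qed.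

Lemma ac_ode n : 2 * PS_mult qc (PS_derive ac) n + PS_mult (PS_derive qc) ac n = 0.
Proof.
  assert (E1 : PS_mult qc (PS_derive ac) n =
     INR (S n) * ac (S n) + sum_f_R0 (fun i => qc (S i) * INR (n - i) * ac (n - i)%nat) n).
  { unfold PS_mult. destruct n as [|n].
    - simpl. unfold PS_derive. rewrite qc_0. simpl. ring.
    - rewrite decomp_sum by lia. simpl pred.
      rewrite qc_0. unfold PS_derive at 1. rewrite Nat.sub_0_r.
      rewrite tech5. replace (S n - S n)%nat with O by lia. simpl (INR 0).
      rewrite Rmult_0_r, Rmult_0_l, Rplus_0_r, Rmult_1_l. f_equal.
      apply sum_eq. intros i Hi. unfold PS_derive.
      replace (S (S n - S i)) with (S n - i)%nat by lia. ring. }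
  rewrite E1, ac_rec. unfold newc. unfold PS_mult.
  field. rewrite S_INR. assert (0 <= INR n) by apply pos_INR. lra.
Qed.

Lemma geo4 n : sum_f_R0 (fun i => 4 ^ (n - i)) n <= 4 ^ (S n) / 3.
Proof.
  assert (E : sum_f_R0 (fun i => 4 ^ (n - i)) n = (4 ^ S n - 1) / 3).
  { induction n as [|n IH].
    - simpl. field.
    - rewrite tech5. replace (S n - S n)%nat with O by lia.
      rewrite (sum_eq _ (fun i => 4 ^ (n - i) * 4)).
      + rewrite <- scal_sum. rewrite IH. simpl. field.
      + intros i Hi. replace (S n - i)%nat with (S (n - i)) by lia. simpl. ring. }
  rewrite E. lra.
Qed.

Lemma dq_abs i : Rabs (PS_derive qc i) <= 2.
Proof.
  unfold PS_derive, qc. rewrite plus_INR, !S_INR. simpl (INR 2).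
  assert (0 <= INR i) by apply pos_INR.
  unfold Rdiv. rewrite !Rabs_mult, Rabs_inv, pow_1_abs.
  simpl (INR 0). rewrite (Rabs_pos_eq 2), (Rabs_pos_eq (INR i + 1)), (Rabs_pos_eq (INR i + 1 + (0 + 1 + 1))) by lra.
  apply (Rmult_le_reg_r (INR i + 1 + (1 + 1))); [lra|]. field_simplify; lra.
Qed.

Lemma ac_bound n : Rabs (ac n) <= 4 ^ n.
Proof.
  enough (H : forall m k, (k <= m)%nat -> Rabs (ac k) <= 4 ^ k) by (apply (H n); lia).
  induction m as [|m IH]; intros k Hk.
  - replace k with O by lia. rewrite ac_0. simpl. rewrite Rabs_R1. lra.
  - destruct (Nat.eq_dec k (S m)) as [->|Hne]; [|apply IH; lia].
    rewrite ac_rec. unfold newc.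
    set (S1 := sum_f_R0 _ m). set (S2 := sum_f_R0 _ m).
    assert (HG := geo4 m).
    assert (Hm : 0 <= INR m) by apply pos_INR.
    assert (HS1 : Rabs S1 <= INR m * (4 ^ S m / 3)).
    { unfold S1. eapply Rle_trans; [apply Rsum_abs|].
      eapply Rle_trans; [apply (sum_Rle _ (fun i => 4 ^ (m - i) * INR m))|].
      - intros i Hi. rewrite !Rabs_mult.
        assert (Rabs (qc (S i)) <= 1) by apply qc_abs.
        assert (Hi2 : Rabs (INR (m - i)) <= INR m).
        { rewrite Rabs_pos_eq by apply pos_INR. apply le_INR. lia. }
        assert (Rabs (ac (m - i)) <= 4 ^ (m - i)) by (apply IH; lia).
        assert (0 <= Rabs (qc (S i))) by apply Rabs_pos.
        assert (0 <= Rabs (INR (m - i))) by apply Rabs_pos.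
        assert (0 <= Rabs (ac (m - i))) by apply Rabs_pos.
        apply Rle_trans with (1 * INR m * 4 ^ (m - i)); [|lra].
        apply Rmult_le_compat; try nra.
      - rewrite <- scal_sum. apply Rmult_le_compat_l; [lra|exact HG]. }
    assert (HS2 : Rabs S2 <= 2 * (4 ^ S m / 3)).
    { unfold S2. eapply Rle_trans; [apply Rsum_abs|].
      eapply Rle_trans; [apply (sum_Rle _ (fun i => 4 ^ (m - i) * 2))|].
      - intros i Hi. rewrite !Rabs_mult.
        assert (Rabs (PS_derive qc i) <= 2) by apply dq_abs.
        assert (Rabs (ac (m - i)) <= 4 ^ (m - i)) by (apply IH; lia).
        rewrite Rmult_comm. apply Rmult_le_compat; try apply Rabs_pos; assumption.
      - rewrite <- scal_sum. apply Rmult_le_compat_l; [lra|exact HG]. }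
    assert (Hp : 0 < 2 * INR (S m)) by (rewrite S_INR; lra).
    unfold Rdiv. rewrite Rabs_mult, Rabs_Ropp, Rabs_inv, (Rabs_pos_eq (2 * INR (S m))) by lra.
    apply (Rmult_le_reg_r (2 * INR (S m))); [lra|].
    rewrite Rmult_assoc, Rinv_l, Rmult_1_r by lra.
    eapply Rle_trans; [apply Rabs_triang|]. rewrite Rabs_mult, (Rabs_pos_eq 2) by lra.
    rewrite S_INR. simpl pow in *. 
    assert (0 <= 4 ^ m) by (apply pow_le; lra).
    nra.
Qed.

Lemma K_rad : Rbar_le (/4) (CV_radius ac).
Proof.
  apply (rad_bound _ _ 1). intro n. rewrite Rabs_mult, <- RPow_abs, Rabs_inv, (Rabs_pos_eq 4) by lra.
  rewrite pow_inv. apply (Rmult_le_reg_r (4 ^ n)); [apply pow_lt; lra|].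
  rewrite Rmult_assoc, Rinv_l, Rmult_1_r, Rmult_1_l by (apply pow_nonzero; lra).
  apply ac_bound.
Qed.


Definition Kf (x : R) : R := PSeries ac x.
Definition dKf (x : R) : R := PSeries (PS_derive ac) x.

Lemma K_in x : Rabs x < /4 -> Rbar_lt (Rabs x) (CV_radius ac).
Proof. intro; apply (rad_lt _ (/4)); [apply K_rad|assumption]. Qed.

Lemma K_der x : Rabs x < /4 -> is_derive Kf x (dKf x).
Proof. intro H. apply is_derive_PSeries. apply K_in; exact H. Qed.

Lemma Q_in4 x : Rabs x < /4 -> Rabs x < 1.
Proof. intros; lra. Qed.

Lemma K_ode_fun x : Rabs x < /4 -> 2 * Qf x * dKf x + dQf x * Kf x = 0.
Proof.
  intro H.
  assert (Hq := Q_in x ltac:(lra)).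
  assert (Hk := K_in x H).
  assert (Hdq : Rbar_lt (Rabs x) (CV_radius (PS_derive qc))) by (rewrite CV_radius_derive; exact Hq).
  assert (Hdk : Rbar_lt (Rabs x) (CV_radius (PS_derive ac))) by (rewrite CV_radius_derive; exact Hk).
  unfold Qf, dKf, dQf, Kf.
  rewrite Rmult_assoc, <- (PSeries_mult qc (PS_derive ac)) by assumption.
  rewrite <- (PSeries_mult (PS_derive qc) ac) by assumption.
  rewrite <- PSeries_scal, <- PSeries_plus.
  - rewrite <- (PSeries_const_0 x). apply PSeries_ext. intro n.
    unfold PS_plus, PS_scal. unfold plus, scal; simpl. unfold mult; simpl. apply ac_ode.
  - apply ex_pseries_scal; [intros; unfold mult; simpl; ring|]. apply ex_pseries_mult; assumption.
  - apply ex_pseries_mult; assumption.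
Qed.

Lemma K_0 : Kf 0 = 1.
Proof. unfold Kf. rewrite PSeries_0. reflexivity. Qed.

Lemma KQ x : Rabs x < /4 -> Kf x ^ 2 * Qf x = 1.
Proof.
  intro Hx.
  set (M := fun t => Kf t ^ 2 * Qf t).
  assert (HM : M x = M 0).
  { apply const_on_interval. intros t Ht.
    assert (Htt : Rabs t < /4).
    { apply Rabs_def1; revert Ht; apply Rmin_case; apply Rmax_case; intros;
       apply Rabs_def2 in Hx; lra. }
    unfold M. auto_derive.
    - split; [eexists; apply K_der; exact Htt|].
      split; [eexists; apply Q_der; lra| exact I].
    - change (fun x0 : R => Qf x0) with Qf. change (fun x0 : R => Kf x0) with Kf.
      rewrite (is_derive_unique Qf t _ (Q_der t ltac:(lra))).
      rewrite (is_derive_unique Kf t _ (K_der t Htt)).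
      assert (E := K_ode_fun t Htt). 
      replace 0 with (Kf t * (2 * Qf t * dKf t + dQf t * Kf t)) by (rewrite E; ring).
      ring. }
  unfold M in HM. rewrite HM, K_0, Q_0. ring.
Qed.

Lemma K_ne0 x : Rabs x < /4 -> Kf x <> 0.
Proof. intros H E. assert (H1 := KQ x H). rewrite E in H1. simpl in H1. lra. Qed.

Lemma K_pos x : Rabs x < /4 -> 0 < Kf x.
Proof.
  intro Hx.
  destruct (Rlt_or_le 0 (Kf x)) as [H|H]; [exact H|exfalso].
  assert (Hn : Kf x < 0) by (assert (Kf x <> 0) by (apply K_ne0; exact Hx); lra).
  assert (Hc : forall t, Rabs t < /4 -> continuity_pt Kf t)
    by (intros t Ht; apply (derive_cont _ _ (dKf t)); apply K_der; exact Ht).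
  apply Rabs_def2 in Hx as Hx'.
  destruct (Rlt_or_le x 0) as [Hneg|Hpos].
  - destruct (Ranalysis5.IVT_interv Kf x 0) as [z [Hz1 Hz2]].
    + intros a Ha. apply Hc. apply Rabs_def1; lra.
    + exact Hneg.
    + exact Hn.
    + rewrite K_0; lra.
    + apply (K_ne0 z); [apply Rabs_def1; lra | exact Hz2].
  - assert (Hx0 : x <> 0) by (intro E; subst; rewrite K_0 in Hn; lra).
    destruct (Ranalysis5.IVT_interv (fun t => - Kf t) 0 x) as [z [Hz1 Hz2]].
    + intros a Ha. apply continuity_pt_opp. apply Hc. apply Rabs_def1; lra.
    + lra.
    + simpl. rewrite K_0; lra.
    + simpl. lra.
    + apply (K_ne0 z); [apply Rabs_def1; lra | lra].
Qed.


Lemma K_eta x : 0 < Rabs x < /4 -> eta (1 + x) = x / Kf x.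
Proof.
  intro Hx.
  assert (Hx0 : x <> 0) by (intro E; subst; rewrite Rabs_R0 in Hx; lra).
  assert (Hk := K_pos x ltac:(lra)).
  assert (HQ := KQ x ltac:(lra)).
  assert (HL := Q_ln x ltac:(lra)).
  unfold eta. replace (1 + x - 1) with x by ring.
  replace (2 * (x - ln (1 + x)) / x ^ 2) with ((/ Kf x) ^ 2).
  - rewrite sqrt_pow2; [field; lra|]. apply Rlt_le, Rinv_0_lt_compat; exact Hk.
  - rewrite <- HL. assert (x ^ 2 <> 0) by (apply pow_nonzero; exact Hx0).
    replace (Qf x) with (/ (Kf x ^ 2)) by (symmetry; apply (Rmult_eq_reg_l (Kf x ^ 2)); [rewrite HQ; field; lra | apply pow_nonzero; lra]).
    field. lra.
Qed.

Lemma K_stir x : Rabs x < /4 -> stir_g x = Kf x ^ 2.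
Proof.
  intro Hx. unfold stir_g. destruct (Req_EM_T x 0) as [E|E].
  - subst. rewrite K_0. ring.
  - assert (Hk := K_pos x ltac:(lra)).
    assert (HQ := KQ x ltac:(lra)).
    assert (HL := Q_ln x ltac:(lra)).
    rewrite <- HL.
    assert (Qf x <> 0) by (intro Z; rewrite Z in HQ; lra).
    replace (Kf x ^ 2) with (/ Qf x) by (symmetry; apply (Rmult_eq_reg_r (Qf x)); [rewrite HQ; field; auto | auto]).
    field. auto.
Qed.

Lemma K_rpow x j : Rabs x < /4 -> Rpower (stir_g x) (INR j + /2) = Kf x ^ (2 * j + 1).
Proof.
  intro Hx. rewrite K_stir by exact Hx.
  assert (Hk := K_pos x Hx).
  assert (Hk2 : 0 < Kf x ^ 2) by (apply pow_lt; exact Hk).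
  rewrite Rpower_plus, Rpower_pow, Rpower_sqrt by exact Hk2.
  rewrite sqrt_pow2 by lra. rewrite <- pow_mult, pow_add. simpl (Kf x ^ 1). ring_simplify.
  reflexivity.
Qed.

Fixpoint powc (m : nat) : nat -> R :=
  match m with
  | O => ac
  | S m' => PS_mult ac (powc m')
  end.

Lemma powc_spec m : Rbar_le (/4) (CV_radius (powc m)) /\
  forall x, Rabs x < /4 -> is_pseries (powc m) x (Kf x ^ (S m)).
Proof.
  induction m as [|m [IHr IHs]].
  - split; [apply K_rad|]. intros x Hx. rewrite pow_1.
    apply PSeries_correct, CV_radius_inside, K_in, Hx.
  - assert (Hs : forall x, Rabs x < /4 -> is_pseries (powc (S m)) x (Kf x ^ S (S m))).
    { intros x Hx. simpl powc. change (Kf x ^ S (S m)) with (Kf x * Kf x ^ S m).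
      apply is_pseries_mult.
      + apply PSeries_correct, CV_radius_inside, K_in, Hx.
      + apply IHs, Hx.
      + apply K_in, Hx.
      + apply (rad_lt _ (/4)); assumption. }
    split; [|exact Hs].
    apply rad_ge; [lra|]. intros x Hx. eexists. apply Hs. lra.
Qed.

Lemma powc_in m x : Rabs x < /4 -> Rbar_lt (Rabs x) (CV_radius (powc m)).
Proof. intro; apply (rad_lt _ (/4)); [apply powc_spec|assumption]. Qed.

Lemma powc_val m x : Rabs x < /4 -> PSeries (powc m) x = Kf x ^ (S m).
Proof. intro H. apply is_pseries_unique. apply powc_spec. exact H. Qed.

Lemma fact_dfact j : INR (Factorial.fact (2 * j)) = 2 ^ j * INR (Factorial.fact j) * INR (odd_dfact j).
Proof.
  induction j as [|j IH].
  - simpl. ring.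
  - replace (2 * S j)%nat with (S (S (2 * j))) by lia.
    change (Factorial.fact (S (S (2 * j)))) with (S (S (2*j)) * (S (2 * j) * Factorial.fact (2 * j)))%nat.
    change (Factorial.fact (S j)) with (S j * Factorial.fact j)%nat.
    change (odd_dfact (S j)) with ((2 * j + 1) * odd_dfact j)%nat.
    rewrite !mult_INR, IH, !S_INR, plus_INR, mult_INR. simpl (INR 2). simpl pow. change (INR 1) with 1. ring.
Qed.

Lemma gamma_val j : gamma_st j = (-1) ^ j * INR (odd_dfact j) * powc (2 * j) (2 * j).
Proof.
  unfold gamma_st.
  rewrite (Derive_n_ext_loc _ (PSeries (powc (2 * j)))).
  - rewrite Derive_n_coef.
    + rewrite fact_dfact. field. split.
      * apply not_0_INR. apply Nat.neq_0_lt_0. apply Factorial.lt_O_fact.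
      * apply pow_nonzero. lra.
    + replace (Finite 0) with (Finite (Rabs 0)) by (rewrite Rabs_R0; reflexivity).
      apply powc_in. rewrite Rabs_R0. lra.
  - exists (mkposreal (/4) ltac:(lra)). intros y Hy.
    change (Rabs (y - 0) < /4) in Hy. rewrite Rminus_0_r in Hy.
    rewrite K_rpow, powc_val by exact Hy. f_equal. lia.
Qed.


Lemma pr_sum b N x : pr b N x = sum_f_R0 (fun k => b (N - k)%nat * x ^ k) N.
Proof.
  induction N as [|N IH].
  - simpl. ring.
  - simpl pr. rewrite IH. rewrite (decomp_sum _ (S N)) by lia. simpl pred.
    rewrite scal_sum. rewrite Nat.sub_0_r. simpl (x ^ 0). rewrite Rmult_1_r, Rplus_comm.
    f_equal. apply sum_eq. intros i Hi. simpl. replace (N - i)%nat with (N - i)%nat by lia. ring.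
Qed.

Lemma sing_rev a N x : x <> 0 ->
  Sing (fun k => a (N - k)%nat) N x = sum_f_R0 (fun k => a k * x ^ k) N / x ^ S N.
Proof.
  intro Hx. assert (Hp : x ^ S N <> 0) by (apply pow_nonzero; exact Hx).
  apply (Rmult_eq_reg_l (x ^ S N)); [|exact Hp].
  rewrite sing_pr by exact Hx. rewrite pr_sum.
  field_simplify; [|exact Hp]. 
  apply sum_eq. intros i Hi. f_equal. f_equal. lia.
Qed.

Lemma sing_scal c b N x : Sing (fun k => c * b k) N x = c * Sing b N x.
Proof.
  unfold Sing. induction N as [|N IH].
  - simpl. unfold Rdiv; ring.
  - rewrite !tech5, IH. unfold Rdiv; ring.
Qed.

Definition sj (j : nat) : R := (-1) ^ (S j) * INR (odd_dfact j).
Definition bS (j k : nat) : R := sj j * powc (2 * j) (2 * j - k).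
Definition cR (j n : nat) : R := sj j * powc (2 * j) (S (2 * j) + n).

Lemma phi_eq j l : phi j l = sj j / eta l ^ (2 * j + 1).
Proof. unfold phi, sj. reflexivity. Qed.

Lemma phi_laurent j x : 0 < Rabs x < /4 ->
  is_pseries (cR j) x (phi j (1 + x) - Sing (bS j) (2 * j) x).
Proof.
  intro Hx.
  assert (Hx0 : x <> 0) by (intro E; subst; rewrite Rabs_R0 in Hx; lra).
  assert (Hk := K_pos x ltac:(lra)).
  assert (Hex : ex_pseries (powc (2 * j)) x) by (apply CV_radius_inside, powc_in; lra).
  assert (HD := PSeries_decr_n (powc (2 * j)) (2 * j) x Hex).
  rewrite powc_val in HD by lra.
  assert (Hex2 : ex_pseries (PS_decr_n (powc (2 * j)) (S (2 * j))) x).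
  { apply ex_pseries_decr_n; [|exact Hex]. right. exists (/ x). unfold mult, one; simpl. field. exact Hx0. }
  apply PSeries_correct in Hex2.
  apply (is_pseries_scal (sj j)) in Hex2; [|unfold mult; simpl; ring].
  assert (Val : phi j (1 + x) - Sing (bS j) (2 * j) x =
     scal (sj j) (PSeries (PS_decr_n (powc (2 * j)) (S (2 * j))) x)).
  { change (scal (sj j) (PSeries (PS_decr_n (powc (2 * j)) (S (2 * j))) x)) with
      (sj j * PSeries (PS_decr_n (powc (2 * j)) (S (2 * j))) x).
    rewrite phi_eq, K_eta by exact Hx.
    unfold bS. rewrite sing_scal, sing_rev by exact Hx0.
    assert (Hxp : x ^ S (2 * j) <> 0) by (apply pow_nonzero; exact Hx0).
    replace (PSeries (PS_decr_n (powc (2 * j)) (S (2 * j))) x) with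
      ((Kf x ^ S (2 * j) - sum_f_R0 (fun k => powc (2 * j) k * x ^ k) (2 * j)) / x ^ S (2 * j))
      by (rewrite HD; field; exact Hxp).
    replace (2 * j + 1)%nat with (S (2 * j)) by lia.
    replace ((x / Kf x) ^ S (2*j)) with (x ^ S (2*j) / Kf x ^ S (2*j))
      by (unfold Rdiv; rewrite Rpow_mult_distr, pow_inv; reflexivity).
    field. split; [exact Hxp| apply pow_nonzero; lra]. }
  rewrite Val. eapply is_pseries_ext; [|exact Hex2]. intro n. reflexivity.
Qed.


Definition pad (b : nat -> R) (N k : nat) : R := if (k <=? N)%nat then b k else 0.

Lemma sing_pad b N L x : (N <= L)%nat -> Sing b N x = Sing (pad b N) L x.
Proof.
  intro H. induction L as [|L IH].
  - replace N with O by lia. unfold Sing, pad. simpl. reflexivity.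
  - destruct (Nat.eq_dec N (S L)) as [->|Hne].
    + unfold Sing. apply sum_eq. intros i Hi. unfold pad.
      replace (i <=? S L)%nat with true by (symmetry; apply Nat.leb_le; lia). reflexivity.
    + unfold Sing in *. rewrite tech5, <- IH by lia. unfold pad.
      replace (S L <=? N)%nat with false by (symmetry; apply Nat.leb_gt; lia).
      unfold Rdiv. ring.
Qed.

Lemma sing_add f g L x : Sing (fun k => f k + g k) L x = Sing f L x + Sing g L x.
Proof.
  unfold Sing. induction L as [|L IH].
  - simpl. unfold Rdiv; ring.
  - rewrite !tech5, IH. unfold Rdiv; ring.
Qed.

Lemma sing_lin b N b' M c x :
  Sing b N x + c * Sing b' M x = Sing (fun k => pad b N k + c * pad b' M k) (Nat.max N M) x.
Proof.
  rewrite sing_add, sing_scal.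
  rewrite (sing_pad b N (Nat.max N M)), (sing_pad b' M (Nat.max N M)) by lia.
  reflexivity.
Qed.

Lemma sing_ext_unique b N b' M c r :
  0 < r -> (forall x, 0 < Rabs x < r -> is_pseries c x (Sing b N x - Sing b' M x)) ->
  forall k, pad b N k = pad b' M k.
Proof.
  intros Hr H k.
  destruct (Nat.le_gt_cases k (Nat.max N M)) as [Hk|Hk].
  - assert (U := sing_unique (Nat.max N M) (fun k => pad b N k + (-1) * pad b' M k) c r Hr).
    assert (U' : pad b N k + (-1) * pad b' M k = 0).
    { apply U; [|exact Hk]. intros x Hx. rewrite <- sing_lin.
      replace (Sing b N x + -1 * Sing b' M x) with (Sing b N x - Sing b' M x) by ring.
      apply H; exact Hx. }
    lra.
  - unfold pad.
    replace (k <=? N)%nat with false by (symmetry; apply Nat.leb_gt; lia).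
    replace (k <=? M)%nat with false by (symmetry; apply Nat.leb_gt; lia). reflexivity.
Qed.

Lemma sing_eq_of_pad b N b' M :
  (forall k, pad b N k = pad b' M k) -> forall y, Sing b N y = Sing b' M y.
Proof.
  intros H y.
  rewrite (sing_pad b N (Nat.max N M)), (sing_pad b' M (Nat.max N M)) by lia.
  unfold Sing. apply sum_eq. intros i _. rewrite H. reflexivity.
Qed.

Definition shiftc (b : nat -> R) (k : nat) : R :=
  match k with O => 0 | S k' => b k' end.

Lemma sing_shift b N x : x <> 0 -> Sing (shiftc b) (S N) x = Sing b N x / x.
Proof.
  intro Hx. unfold Sing. induction N as [|N IH].
  - simpl. field. exact Hx.
  - rewrite tech5, IH, tech5. simpl shiftc. simpl pow. field.
    repeat split; try apply pow_nonzero; exact Hx.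
Qed.

Definition dc (b : nat -> R) : nat -> R := shiftc (fun k => - INR (S k) * b k).

Lemma sing_der b N x : x <> 0 -> is_derive (Sing b N) x (Sing (dc b) (S N) x).
Proof.
  intro Hx. induction N as [|N IH].
  - apply (is_derive_ext (fun y => b 0%nat / y ^ 1)); [intro; reflexivity|].
    auto_derive; [rewrite Rmult_1_r; exact Hx|].
    unfold Sing, dc, shiftc. simpl. field. exact Hx.
  - assert (H2 : is_derive (fun y => b (S N) / y ^ S (S N)) x (dc b (S (S N)) / x ^ S (S (S N)))).
    { auto_derive.
      - change (x * (x * x^N)) with (x ^ S (S N)). apply pow_nonzero; exact Hx.
      - change (match N with 0%nat => 1 | S _ => INR N + 1 end) with (INR (S N)).
        unfold dc, shiftc. rewrite !S_INR. simpl pow. field.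
        repeat split; try apply pow_nonzero; exact Hx. }
    assert (H := is_derive_plus _ _ _ _ _ IH H2).
    apply (is_derive_ext (fun y => Sing b N y + b (S N) / y ^ S (S N))).
    + intro t. unfold Sing. rewrite tech5. reflexivity.
    + unfold Sing. rewrite tech5. exact H.
Qed.


Definition hh (l : R) : R := l - 1 - ln l.

Lemma ln_lt_m1 y : 0 < y -> y <> 1 -> ln y < y - 1.
Proof.
  intros Hy H1.
  assert (Hl : ln y <> 0) by (intro E; apply H1; rewrite <- (exp_ln y Hy), E, exp_0; reflexivity).
  assert (H := exp_ineq1 (ln y) Hl). rewrite exp_ln in H by exact Hy. lra.
Qed.

Lemma hh_pos l : 0 < l -> l <> 1 -> 0 < hh l.
Proof. intros Hl H1. unfold hh. assert (H := ln_lt_m1 l Hl H1). lra. Qed.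

Lemma hh_1 : hh 1 = 0.
Proof. unfold hh. rewrite ln_1. ring. Qed.

Lemma hh_incr a b : 1 <= a -> a < b -> hh a < hh b.
Proof.
  intros Ha Hab. unfold hh.
  assert (H := ln_lt_m1 (b / a) ltac:(apply Rdiv_lt_0_compat; lra)
                 ltac:(intro E; apply (Rmult_eq_compat_r a) in E; unfold Rdiv in E;
                        rewrite Rmult_assoc, Rinv_l, Rmult_1_r, Rmult_1_l in E; lra)).
  rewrite ln_div in H by lra.
  assert (b / a - 1 <= b - a).
  { apply (Rmult_le_reg_r a); [lra|]. unfold Rdiv. rewrite Rmult_minus_distr_r, Rmult_assoc, Rinv_l by lra. nra. }
  lra.
Qed.

Lemma hh_decr a b : 0 < a -> a < b -> b <= 1 -> hh b < hh a.
Proof.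
  intros Ha Hab Hb. unfold hh.
  assert (H := ln_lt_m1 (a / b) ltac:(apply Rdiv_lt_0_compat; lra)
                 ltac:(intro E; apply (Rmult_eq_compat_r b) in E; unfold Rdiv in E;
                        rewrite Rmult_assoc, Rinv_l, Rmult_1_r, Rmult_1_l in E; lra)).
  rewrite ln_div in H by lra.
  assert (b - a <= - (a / b - 1)).
  { replace (- (a / b - 1)) with ((b - a) + (b - a) * (1 - b) / b) by (field; lra).
    assert (0 <= (b - a) * (1 - b) / b) by (apply Rmult_le_pos; [apply Rmult_le_pos; lra| apply Rlt_le, Rinv_0_lt_compat; lra]).
    lra. }
  lra.
Qed.

Lemma eta_gt l : 1 < l -> eta l = sqrt (2 * hh l).
Proof.
  intro Hl. unfold eta, hh.
  rewrite sqrt_div_alt by (apply pow_lt; lra). rewrite sqrt_pow2 by lra. field. lra.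
Qed.

Lemma eta_lt l : 0 < l -> l < 1 -> eta l = - sqrt (2 * hh l).
Proof.
  intros H0 Hl. unfold eta, hh.
  replace ((l - 1) ^ 2) with ((1 - l) ^ 2) by ring.
  rewrite sqrt_div_alt by (apply pow_lt; lra).
  rewrite sqrt_pow2 by lra. field. lra.
Qed.

Lemma loc_abs x e (P : R -> Prop) : 0 < e -> (forall y, Rabs (y - x) < e -> P y) -> locally x P.
Proof. intros He H. exists (mkposreal e He). intros y Hy. apply H. exact Hy. Qed.

Lemma eta_1 : eta 1 = 0.
Proof. unfold eta. replace (1 - 1) with 0 by ring. ring. Qed.

Lemma eta_incr a b : 0 < a -> a < b -> eta a < eta b.
Proof.
  intros Ha Hab.
  destruct (Rtotal_order b 1) as [Hb|[Hb|Hb]].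
  - rewrite (eta_lt a), (eta_lt b) by lra.
    assert (hh b < hh a) by (apply hh_decr; lra).
    assert (0 < hh b) by (apply hh_pos; lra).
    apply Ropp_lt_contravar. apply sqrt_lt_1_alt. lra.
  - subst. rewrite eta_1, eta_lt by lra.
    assert (0 < hh a) by (apply hh_pos; lra).
    assert (0 < sqrt (2 * hh a)) by (apply sqrt_lt_R0; lra). lra.
  - rewrite (eta_gt b) by lra.
    assert (0 < hh b) by (apply hh_pos; lra).
    assert (0 < sqrt (2 * hh b)) by (apply sqrt_lt_R0; lra).
    destruct (Rtotal_order a 1) as [Ha1|[Ha1|Ha1]].
    + rewrite eta_lt by lra. assert (0 <= sqrt (2 * hh a)) by apply sqrt_pos. lra.
    + subst. rewrite eta_1. lra.
    + rewrite eta_gt by lra. apply sqrt_lt_1_alt.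
      assert (hh a < hh b) by (apply hh_incr; lra).
      assert (0 < hh a) by (apply hh_pos; lra). lra.
Qed.

Lemma eta_inj a b : 0 < a -> 0 < b -> eta a = eta b -> a = b.
Proof.
  intros Ha Hb E. destruct (Rtotal_order a b) as [H|[H|H]]; [|exact H|].
  - assert (H' := eta_incr a b Ha H). lra.
  - assert (H' := eta_incr b a Hb H). lra.
Qed.

Lemma lam_of_eta l : 0 < l -> lam_of (eta l) = l.
Proof.
  intro Hl. unfold lam_of.
  destruct (epsilon_spec (inhabits 1) (fun l0 => 0 < l0 /\ eta l0 = eta l) (ex_intro _ l (conj Hl eq_refl)))
    as [H1 H2].
  apply eta_inj; assumption.
Qed.

Lemma eta_ne0 l : 0 < l -> l <> 1 -> eta l <> 0.
Proof.
  intros Hl H1 E. rewrite <- eta_1 in E. apply H1. apply eta_inj; lra.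
Qed.

Lemma eta_der l : 0 < l -> l <> 1 -> is_derive eta l ((l - 1) / (l * eta l)).
Proof.
  intros Hl H1.
  assert (Hh : 0 < hh l) by (apply hh_pos; assumption).
  assert (Hs : 0 < sqrt (2 * hh l)) by (apply sqrt_lt_R0; lra).
  destruct (Rlt_or_le 1 l) as [Hg|Hle].
  - apply (is_derive_ext_loc (fun t => sqrt (2 * (t - 1 - ln t)))).
    + apply (loc_abs l (l - 1)); [lra|]. intros y Hy. apply Rabs_def2 in Hy.
      rewrite eta_gt by lra. reflexivity.
    + rewrite eta_gt by lra. unfold hh in *. auto_derive.
      * split; [lra|]. split; [lra| exact I].
      * replace (l + - (1) + - ln l) with (l - 1 - ln l) by ring. field. split; lra.
  - assert (Hlt : l < 1) by lra.
    apply (is_derive_ext_loc (fun t => - sqrt (2 * (t - 1 - ln t)))).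
    + apply (loc_abs l (Rmin l (1 - l))); [apply Rmin_case; lra|]. intros y Hy. apply Rabs_def2 in Hy.
      assert (Rmin l (1 - l) <= l) by apply Rmin_l. assert (Rmin l (1 - l) <= 1 - l) by apply Rmin_r.
      rewrite eta_lt by lra. reflexivity.
    + rewrite eta_lt by lra. unfold hh in *. auto_derive.
      * split; [lra|]. split; [lra| exact I].
      * replace (l + - (1) + - ln l) with (l - 1 - ln l) by ring. field. split; lra.
Qed.


Lemma inv_der (G C : R -> R) l0 dC : 0 < l0 -> l0 <> 1 ->
  (forall l, 0 < l -> l <> 1 -> G (eta l) = C l) -> is_derive C l0 dC ->
  is_derive G (eta l0) (dC * (l0 * eta l0 / (l0 - 1))).
Proof.
  intros Hl0 H10 HGC HC.
  assert (Hd0 : 0 < Rabs (l0 - 1)) by (apply Rabs_pos_lt; lra).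
  set (d := Rmin l0 (Rabs (l0 - 1)) / 2).
  assert (Hd : 0 < d) by (unfold d; apply Rmin_case; lra).
  assert (Hd1 : d < l0) by (unfold d; assert (Rmin l0 (Rabs (l0 - 1)) <= l0) by apply Rmin_l; lra).
  assert (Hd2 : d < Rabs (l0 - 1)) by (unfold d; assert (Rmin l0 (Rabs (l0 - 1)) <= Rabs (l0 - 1)) by apply Rmin_r; lra).
  set (lb := l0 - d). set (ub := l0 + d).
  assert (Hgood : forall t, lb <= t <= ub -> 0 < t /\ t <> 1).
  { intros t Ht. unfold lb, ub in Ht. split; [lra|]. intro E. subst t.
    destruct (Rle_or_lt 0 (l0 - 1)) as [P|P];
      [rewrite Rabs_pos_eq in Hd2 by lra | rewrite Rabs_left in Hd2 by lra]; lra. }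
  assert (Hlbub : lb < ub) by (unfold lb, ub; lra).
  assert (Hincr : forall x y, lb <= x -> x < y -> y <= ub -> eta x < eta y).
  { intros x y Hx Hxy Hy. apply eta_incr; [apply (Hgood x); lra| exact Hxy]. }
  assert (Hcont : forall a, lb <= a <= ub -> continuity_pt eta a).
  { intros a Ha. destruct (Hgood a Ha). apply (derive_cont _ _ _ (eta_der a H H0)). }
  assert (Hsurj : forall e, eta lb <= e <= eta ub -> lb <= lam_of e <= ub /\ eta (lam_of e) = e).
  { intros e He. destruct (Ranalysis5.f_interv_is_interv eta lb ub e Hlbub He Hcont) as [t [Ht Hte]].
    subst e. destruct (Hgood t Ht). rewrite lam_of_eta by assumption. split; [exact Ht|reflexivity]. }
  set (e0 := eta l0).
  assert (He0 : eta lb < e0 < eta ub) by (unfold e0; split; apply Hincr; unfold lb, ub; lra).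
  assert (Hlb : 0 < lb) by (apply (Hgood lb); lra).
  assert (Hub : 0 < ub) by (apply (Hgood ub); lra).
  assert (Prf : forall a, lam_of (eta lb) <= a <= lam_of (eta ub) -> derivable_pt eta a).
  { intros a Ha. rewrite !lam_of_eta in Ha by assumption. destruct (Hgood a Ha).
    exists ((a - 1) / (a * eta a)). apply is_derive_Reals. apply eta_der; assumption. }
  assert (Hcg : continuity_pt lam_of e0).
  { apply (Ranalysis5.continuity_pt_recip_interv eta lam_of lb ub Hlbub Hincr).
    - intros x Hx1 Hx2. unfold comp, id. apply Hsurj. lra.
    - intros x Hx1 Hx2. apply Hsurj. lra.
    - exact Hcont.
    - exact He0. }
  assert (Hinc : lam_of (eta lb) <= lam_of e0 <= lam_of (eta ub)).
  { unfold e0. rewrite !lam_of_eta by assumption. unfold lb, ub; lra. }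
  assert (Hlim : derivable_pt_lim eta (lam_of e0) ((l0 - 1) / (l0 * eta l0))).
  { unfold e0. rewrite lam_of_eta by assumption. apply is_derive_Reals. apply eta_der; assumption. }
  assert (Hne0 : (l0 - 1) / (l0 * eta l0) <> 0).
  { assert (eta l0 <> 0) by (apply eta_ne0; assumption).
    unfold Rdiv. apply Rmult_integral_contrapositive_currified; [lra|].
    apply Rinv_neq_0_compat. apply Rmult_integral_contrapositive_currified; lra. }
  assert (Hne : derive_pt eta (lam_of e0) (Prf (lam_of e0) Hinc) <> 0).
  { rewrite (derive_pt_eq_0 _ _ _ _ Hlim). exact Hne0. }
  assert (HL := Ranalysis5.derivable_pt_lim_recip_interv eta lam_of (eta lb) (eta ub) e0 Prf Hcg
                  ltac:(lra) He0 Hinc ltac:(intros x Hx; apply Hsurj; exact Hx) Hne).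
  rewrite (derive_pt_eq_0 _ _ _ _ Hlim) in HL.
  apply is_derive_Reals in HL.
  assert (HC' : is_derive C (lam_of e0) dC) by (unfold e0; rewrite lam_of_eta by assumption; exact HC).
  assert (Hcomp := is_derive_comp C lam_of e0 _ _ HC' HL).
  apply (is_derive_ext_loc (fun e => C (lam_of e))).
  - apply (loc_abs e0 (Rmin (e0 - eta lb) (eta ub - e0))); [apply Rmin_case; lra|].
    intros y Hy. apply Rabs_def2 in Hy.
    assert (Rmin (e0 - eta lb) (eta ub - e0) <= e0 - eta lb) by apply Rmin_l.
    assert (Rmin (e0 - eta lb) (eta ub - e0) <= eta ub - e0) by apply Rmin_r.
    destruct (Hsurj y ltac:(lra)) as [Hy1 Hy2].
    destruct (Hgood _ Hy1). rewrite <- Hy2 at 2. symmetry. apply HGC; assumption.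
  - replace (dC * (l0 * e0 / (l0 - 1))) with (scal (1 / ((l0 - 1) / (l0 * eta l0))) dC).
    + exact Hcomp.
    + unfold scal; simpl; unfold mult; simpl. unfold e0. field.
      assert (eta l0 <> 0) by (apply eta_ne0; assumption). split; [|split]; lra.
Qed.


Definition dphi (j : nat) (l : R) : R :=
  - INR (2 * j + 1) * sj j / eta l ^ (2 * j + 2) * ((l - 1) / (l * eta l)).

Lemma inv_pow_der (s : R) n l (d : R) : eta l <> 0 -> is_derive eta l d ->
  is_derive (fun t => s / eta t ^ (S n)) l (- INR (S n) * s / eta l ^ (S (S n)) * d).
Proof.
  intros Hn He.
  auto_derive.
  - split; [eexists; exact He|]. split; [|exact I].
    apply Rmult_integral_contrapositive_currified; [exact Hn| apply pow_nonzero; exact Hn].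
  - change (fun x : R => eta x) with eta. rewrite (is_derive_unique eta l _ He).
    simpl pred. rewrite <- !tech_pow_Rmult. change (match n with 0%nat => 1 | S _ => INR n + 1 end) with (INR (S n)). field.
    repeat split; try exact Hn; try (apply pow_nonzero; exact Hn).
Qed.

Lemma phi_der j l : 0 < l -> l <> 1 -> is_derive (phi j) l (dphi j l).
Proof.
  intros Hl H1.
  assert (He := eta_der l Hl H1). assert (Hn := eta_ne0 l Hl H1).
  apply (is_derive_ext (fun t => sj j / eta t ^ (S (2 * j)))).
  { intro t. rewrite phi_eq. f_equal. f_equal. lia. }
  unfold dphi. replace (2 * j + 2)%nat with (S (S (2 * j))) by lia.
  replace (2 * j + 1)%nat with (S (2 * j)) by lia.
  apply inv_pow_der; assumption.
Qed.

Lemma sj_S j : sj (S j) = - INR (2 * j + 1) * sj j.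
Proof.
  unfold sj. change (odd_dfact (S j)) with ((2 * j + 1) * odd_dfact j)%nat.
  rewrite mult_INR. simpl pow. ring.
Qed.

Lemma phi_rec j l : 0 < l -> l <> 1 -> l / (l - 1) * dphi j l = phi (S j) l.
Proof.
  intros Hl H1. assert (Hn := eta_ne0 l Hl H1).
  rewrite phi_eq, sj_S. unfold dphi.
  replace (2 * j + 2)%nat with (S (2 * j + 1)) by lia.
  replace (2 * S j + 1)%nat with (S (S (2 * j + 1))) by lia.
  rewrite <- !tech_pow_Rmult. field.
  split; [apply pow_nonzero; exact Hn|]. split; [exact Hn|]. lra.
Qed.

Definition Cj (j : nat) (l : R) : R := phi j l - Sing (bS j) (2 * j) (l - 1).

Lemma Cj_der j l : 0 < l -> l <> 1 ->
  is_derive (Cj j) l (dphi j l - Sing (dc (bS j)) (S (2 * j)) (l - 1)).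
Proof.
  intros Hl H1.
  unfold Cj. apply (is_derive_minus (phi j) (fun t => Sing (bS j) (2 * j) (t - 1)) l); [apply phi_der; assumption|].
  assert (Hs := sing_der (bS j) (2 * j) (l - 1) ltac:(lra)).
  assert (Hm : is_derive (fun t : R => t - 1) l 1).
  { auto_derive; [exact I| ring]. }
  assert (H := is_derive_comp (Sing (bS j) (2 * j)) (fun t => t - 1) l _ _ Hs Hm).
  unfold scal in H; simpl in H; unfold mult in H; simpl in H. rewrite Rmult_1_l in H. exact H.
Qed.

Lemma cR_rad j : Rbar_le (/4) (CV_radius (cR j)).
Proof.
  apply rad_ge; [lra|]. intros x Hx. eexists. apply phi_laurent. lra.
Qed.

Definition deltac (c : R) (k : nat) : R := match k with O => c | S _ => 0 end.

Lemma sing_delta c y : y <> 0 -> Sing (deltac c) 0 y = c / y.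
Proof. intro. unfold Sing. simpl. field. exact H. Qed.

Lemma sing_rec j y : y <> 0 ->
  Sing (bS (S j)) (2 * S j) y = (1 + / y) * Sing (dc (bS j)) (S (2 * j)) y - gamma_st (S j) / y.
Proof.
  intro Hy.
  set (d0 := PS_derive (cR j) 0).
  set (M1 := S (S (2 * j))).
  set (T1 := fun k => pad (dc (bS j)) (S (2 * j)) k + 1 * pad (shiftc (dc (bS j))) M1 k).
  set (B := fun k => pad T1 M1 k + 1 * pad (deltac d0) 0 k).
  assert (HB : forall x, x <> 0 ->
     Sing B M1 x = (1 + / x) * Sing (dc (bS j)) (S (2 * j)) x + d0 / x).
  { intros x Hx.
    assert (E1 : Sing B M1 x = Sing T1 M1 x + 1 * Sing (deltac d0) 0 x).
    { rewrite sing_lin. replace (Nat.max M1 0) with M1 by (unfold M1; lia). reflexivity. }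
    assert (E2 : Sing T1 M1 x = Sing (dc (bS j)) (S (2 * j)) x + 1 * Sing (shiftc (dc (bS j))) M1 x).
    { rewrite sing_lin. replace (Nat.max (S (2 * j)) M1) with M1 by (unfold M1; lia). reflexivity. }
    rewrite E1, E2. unfold M1. rewrite sing_shift, sing_delta by exact Hx.
    field. exact Hx. }
  set (P := PS_plus (PS_opp (cR (S j))) (PS_plus (PS_derive (cR j)) (PS_decr_1 (PS_derive (cR j))))).
  assert (HP : forall x, 0 < Rabs x < /4 -> is_pseries P x (Sing (bS (S j)) (2 * S j) x - Sing B M1 x)).
  { intros x Hx.
    assert (Hx0 : x <> 0) by (intro E; subst; rewrite Rabs_R0 in Hx; lra).
    assert (Hxl : 0 < 1 + x) by (destruct Hx as [_ Hx2]; apply Rabs_def2 in Hx2; lra).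
    assert (Hx1 : 1 + x <> 1) by lra.
    assert (Hin : Rbar_lt (Rabs x) (CV_radius (cR j))) by (apply (rad_lt _ (/4)); [apply cR_rad|lra]).
    assert (Hin' : Rbar_lt (Rabs x) (CV_radius (PS_derive (cR j)))) by (rewrite CV_radius_derive; exact Hin).
    assert (HinS : Rbar_lt (Rabs x) (CV_radius (cR (S j)))) by (apply (rad_lt _ (/4)); [apply cR_rad|lra]).
    assert (Hd : dphi j (1 + x) = Sing (dc (bS j)) (S (2 * j)) x + PSeries (PS_derive (cR j)) x).
    { assert (D1 : is_derive (fun y => phi j (1 + y)) x (dphi j (1 + x))).
      { assert (Hm : is_derive (fun t : R => 1 + t) x 1) by (auto_derive; [exact I| ring]).
        assert (H := is_derive_comp (phi j) (fun t => 1 + t) x _ _ (phi_der j (1 + x) Hxl Hx1) Hm).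
        unfold scal in H; simpl in H; unfold mult in H; simpl in H. rewrite Rmult_1_l in H. exact H. }
      assert (D2 : is_derive (fun y => Sing (bS j) (2 * j) y + PSeries (cR j) y) x
                     (Sing (dc (bS j)) (S (2 * j)) x + PSeries (PS_derive (cR j)) x)).
      { apply (is_derive_plus (Sing (bS j) (2 * j)) (PSeries (cR j))).
        - apply sing_der; exact Hx0.
        - apply is_derive_PSeries; exact Hin. }
      assert (D3 : is_derive (fun y => phi j (1 + y)) x
                     (Sing (dc (bS j)) (S (2 * j)) x + PSeries (PS_derive (cR j)) x)).
      { apply (is_derive_ext_loc (fun y => Sing (bS j) (2 * j) y + PSeries (cR j) y)); [|exact D2].
        apply (loc_abs x (Rmin (Rabs x) (/4 - Rabs x))); [apply Rmin_case; lra|].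
        intros z Hyx.
        assert (Rmin (Rabs x) (/4 - Rabs x) <= Rabs x) by apply Rmin_l.
        assert (Rmin (Rabs x) (/4 - Rabs x) <= /4 - Rabs x) by apply Rmin_r.
        assert (Hy' : 0 < Rabs z < /4).
        { split.
          - apply Rabs_pos_lt. intro E; subst. rewrite Rminus_0_l, Rabs_Ropp in Hyx. lra.
          - assert (Rabs z <= Rabs (z - x) + Rabs x) by
              (replace z with ((z - x) + x) at 1 by ring; apply Rabs_triang). lra. }
        assert (L := is_pseries_unique _ _ _ (phi_laurent j z Hy')).
        cbv beta. rewrite L. apply Rplus_minus. }
      rewrite <- (is_derive_unique _ _ _ D1). apply is_derive_unique. exact D3. }
    assert (Hrec := phi_rec j (1 + x) Hxl Hx1).
    replace (1 + x - 1) with x in Hrec by ring.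
    assert (LS := is_pseries_unique _ _ _ (phi_laurent (S j) x Hx)).
    assert (Hdec := PSeries_decr_1 (PS_derive (cR j)) x (CV_radius_inside _ _ Hin')).
    fold d0 in Hdec.
    assert (Hex1 : ex_pseries (PS_decr_1 (PS_derive (cR j))) x).
    { apply CV_radius_inside. rewrite CV_radius_decr_1. exact Hin'. }
    assert (Hval : Sing (bS (S j)) (2 * S j) x - Sing B M1 x =
       - PSeries (cR (S j)) x + (PSeries (PS_derive (cR j)) x + PSeries (PS_decr_1 (PS_derive (cR j))) x)).
    { rewrite HB by exact Hx0.
      replace (Sing (bS (S j)) (2 * S j) x) with (phi (S j) (1 + x) - PSeries (cR (S j)) x) by lra.
      rewrite <- Hrec, Hd.
      replace (PSeries (PS_decr_1 (PS_derive (cR j))) x) with ((PSeries (PS_derive (cR j)) x - d0) / x)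
        by (rewrite Hdec; field; exact Hx0).
      field. lra. }
    rewrite Hval. unfold P.
    change (- PSeries (cR (S j)) x + (PSeries (PS_derive (cR j)) x + PSeries (PS_decr_1 (PS_derive (cR j))) x))
      with (plus (opp (PSeries (cR (S j)) x)) (plus (PSeries (PS_derive (cR j)) x) (PSeries (PS_decr_1 (PS_derive (cR j))) x))).
    apply (@is_pseries_plus R_AbsRing R_NormedModule); [apply (@is_pseries_opp R_AbsRing R_NormedModule)|apply (@is_pseries_plus R_AbsRing R_NormedModule)].
    - apply PSeries_correct, CV_radius_inside. exact HinS.
    - apply PSeries_correct, CV_radius_inside. exact Hin'.
    - apply PSeries_correct. exact Hex1. }
  assert (Hpad := sing_ext_unique _ _ _ _ _ (/4) ltac:(lra) HP).
  assert (H0 := Hpad 0%nat).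
  assert (Hg : gamma_st (S j) = - bS (S j) 0).
  { rewrite gamma_val. unfold bS, sj. rewrite Nat.sub_0_r. simpl pow. ring. }
  assert (Hd0 : d0 = - gamma_st (S j)).
  { rewrite Hg. revert H0. unfold B, T1, pad, M1. simpl. unfold dc, shiftc. simpl. intro H0. lra. }
  rewrite (sing_eq_of_pad _ _ _ _ Hpad y), HB by exact Hy.
  rewrite Hd0. field. exact Hy.
Qed.


Lemma main_ind j : forall l, 0 < l -> l <> 1 -> c_fun j (eta l) = Cj j l.
Proof.
  induction j as [|j IH]; intros l Hl H1.
  - simpl c_fun. rewrite lam_of_eta by exact Hl. unfold Cj, phi, Sing, bS, sj. simpl.
    unfold ac. simpl.
    assert (eta l <> 0) by (apply eta_ne0; assumption).
    field. split; [lra|assumption].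
  - simpl c_fun. rewrite lam_of_eta by exact Hl.
    assert (Hn : eta l <> 0) by (apply eta_ne0; assumption).
    assert (HD := inv_der (c_fun j) (Cj j) l _ Hl H1 IH (Cj_der j l Hl H1)).
    rewrite (is_derive_unique _ _ _ HD).
    unfold Cj. rewrite sing_rec by lra.
    rewrite <- (phi_rec j l Hl H1).
    field. split; [lra|assumption].
Qed.

Theorem lemmaA3 (j : nat) :
  (exists Sp : R -> R, is_singular_part (phi j) 1 Sp) /\
  (forall Sp : R -> R, is_singular_part (phi j) 1 Sp ->
     forall l : R, 0 < l -> l <> 1 ->
       c_fun j (eta l) = phi j l - Sp l).
Proof.
  split.
  - exists (fun l => Sing (bS j) (2 * j) (l - 1)).
    exists (2 * j)%nat, (bS j), (cR j), (/4).
    split; [lra|]. split; [intro x; reflexivity|].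
    intros x Hx. replace (phi j x) with (phi j (1 + (x - 1))) by (f_equal; ring).
    apply phi_laurent. exact Hx.
  - intros Sp [N [b [c [r [Hr [HSp Hc]]]]]] l Hl H1.
    rewrite main_ind by assumption. unfold Cj. f_equal.
    rewrite HSp. symmetry.
    apply (sing_eq_of_pad b N (bS j) (2 * j)).
    apply (sing_ext_unique _ _ _ _ (PS_plus (cR j) (PS_opp c)) (Rmin r (/4))).
    + apply Rmin_case; lra.
    + intros x Hx.
      assert (Rmin r (/4) <= r) by apply Rmin_l.
      assert (Rmin r (/4) <= /4) by apply Rmin_r.
      assert (H2 := phi_laurent j x ltac:(lra)).
      assert (H3 : is_pseries c x (phi j (1 + x) - Sp (1 + x))).
      { replace x with ((1 + x) - 1) at 1 by ring. apply Hc. replace (1 + x - 1) with x by ring. lra. }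
      rewrite HSp in H3. replace (1 + x - 1) with x in H3 by ring.
      assert (H4 := @is_pseries_plus R_AbsRing R_NormedModule _ _ _ _ _ H2 (@is_pseries_opp R_AbsRing R_NormedModule _ _ _ H3)).
      replace (Sing b N x - Sing (bS j) (2 * j) x) with
        (plus (phi j (1 + x) - Sing (bS j) (2 * j) x) (opp (phi j (1 + x) - Sing b N x))).
      * exact H4.
      * unfold plus, opp; simpl. ring.
Qed.
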